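(* Let $\mathcal{C}$ be a full reflective subcategory of $\mathsf{Top}$, closed under isomorphisms and containing the two-point discrete space. If $\mathcal{C}$ contains all indiscrete spaces and at least one space that is not indiscrete, then the finitely generated objects of $\mathcal{C}$ are precisely the finite discrete spaces.
   Context: An object $X$ of $\mathcal{C}$ is finitely generated if for every directed diagram $(Z_i)_{i\in I}$ in $\mathcal{C}$ (indexed by a directed poset, i.e. every finite subset has an upper bound) all of whose connecting morphisms $z_{i,j}$ are monomorphisms, with colimit cocone $c_i:Z_i\to Z$ in $\mathcal{C}$, every morphism $f:X\to Z$ factorizes as $f=c_i\cdot g$ for some $i$ and $g:X\to Z_i$, and if also $f=c_i\cdot g'$ then $z_{i,j}\cdot g=z_{i,j}\cdot g'$ for some connecting morphism $z_{i,j}$. *)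

(* Defs.v *)
From HB Require Import structures.
From mathcomp Require Import all_boot all_order all_algebra.
From mathcomp Require Import all_classical all_reals topology.
From Stdlib Require List.
Set Implicit Arguments. Unset Strict Implicit. Unset Printing Implicit Defensive.
Local Open Scope classical_set_scope.

(* A subcategory of Top is given by a predicate on objects; it is full,
   so its morphisms are all continuous maps between its objects. *)
Definition subcat := topologicalType -> Prop.

Definition is_homeomorphism (X Y : topologicalType) (f : X -> Y) :=
  continuous f /\ exists g : Y -> X, continuous g /\ g \o f = id /\ f \o g = id.

Definition iso_closed (C : subcat) :=
  forall (X Y : topologicalType) (f : X -> Y), is_homeomorphism f -> C X -> C Y.

Definition reflective (C : subcat) :=
  forall X : topologicalType, exists (RX : topologicalType) (eta : X -> RX),
    [/\ C RX, continuous eta &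
      forall (Y : topologicalType), C Y -> forall f : X -> Y, continuous f ->
        (exists g : RX -> Y, continuous g /\ g \o eta = f) /\
        (forall g g' : RX -> Y, continuous g -> continuous g' ->
           g \o eta = f -> g' \o eta = f -> g = g')].

Definition discrete_top (X : topologicalType) := forall A : set X, open A.
Definition indiscrete_top (X : topologicalType) :=
  forall A : set X, open A -> A = set0 \/ A = setT.

Definition two_point_discrete (X : topologicalType) :=
  discrete_top X /\ exists a b : X, a <> b /\ forall x : X, x = a \/ x = b.

Definition Cmono (C : subcat) (A B : topologicalType) (f : A -> B) :=
  forall W : topologicalType, C W -> forall g h : W -> A,
    continuous g -> continuous h -> f \o g = f \o h -> g = h.

Definition directed_poset (I : Type) (le : I -> I -> Prop) :=
  [/\ forall i, le i i,
      forall i j, le i j -> le j i -> i = j,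
      forall i j k, le i j -> le j k -> le i k &
      forall s : list I, exists u, forall i, List.In i s -> le i u].

Definition Cdiagram (C : subcat) (I : Type) (le : I -> I -> Prop)
  (Z : I -> topologicalType) (z : forall i j, le i j -> Z i -> Z j) :=
  [/\ forall i, C (Z i),
      forall i j (p : le i j), continuous (z i j p),
      forall i (p : le i i), z i i p = id &
      forall i j k (p : le i j) (q : le j k) (r : le i k),
        z j k q \o z i j p = z i k r].

Definition cocone (I : Type) (le : I -> I -> Prop)
  (Z : I -> topologicalType) (z : forall i j, le i j -> Z i -> Z j)
  (W : topologicalType) (d : forall i, Z i -> W) :=
  (forall i, continuous (d i)) /\
  (forall i j (p : le i j), d j \o z i j p = d i).

Definition Ccolimit (C : subcat) (I : Type) (le : I -> I -> Prop)
  (Z : I -> topologicalType) (z : forall i j, le i j -> Z i -> Z j)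
  (L : topologicalType) (c : forall i, Z i -> L) :=
  [/\ C L, cocone z c &
    forall W : topologicalType, C W -> forall d : forall i, Z i -> W, cocone z d ->
      (exists u : L -> W, continuous u /\ forall i, u \o c i = d i) /\
      (forall u u' : L -> W, continuous u -> continuous u' ->
         (forall i, u \o c i = d i) -> (forall i, u' \o c i = d i) -> u = u')].

Definition finitely_generated (C : subcat) (X : topologicalType) :=
  forall (I : Type) (le : I -> I -> Prop)
    (Z : I -> topologicalType) (z : forall i j, le i j -> Z i -> Z j)
    (L : topologicalType) (c : forall i, Z i -> L),
    directed_poset le -> Cdiagram C z ->
    (forall i j (p : le i j), Cmono C (z i j p)) ->
    Ccolimit C z c ->
    forall f : X -> L, continuous f ->
      (exists i (g : X -> Z i), continuous g /\ f = c i \o g) /\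
      (forall i (g g' : X -> Z i), continuous g -> continuous g' ->
         f = c i \o g -> f = c i \o g' ->
         exists j (p : le i j), z i j p \o g = z i j p \o g').

(* Main.v *)
Require Import Defs.
From HB Require Import structures.
From mathcomp Require Import all_boot all_order all_algebra.
From mathcomp Require Import all_classical all_reals topology.
From Stdlib Require List.
Local Open Scope classical_set_scope.

Module Aux.
Set Implicit Arguments. Unset Strict Implicit. Unset Printing Implicit Defensive.

Definition indisc (T : Type) : Type := T.
HB.instance Definition _ (T : Type) := gen_eqMixin (indisc T).
HB.instance Definition _ (T : Type) := gen_choiceMixin (indisc T).

Definition indisc_op (T : Type) (A : set (indisc T)) := A = set0 \/ A = setT.

Lemma indisc_opT T : indisc_op (setT : set (indisc T)).
Proof. by right. Qed.

Lemma indisc_opI T : setI_closed (@indisc_op T).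
Proof.
move=> A B [->|->] [->|->]; rewrite ?set0I ?setI0 ?setIT; by [left|right].
Qed.

Lemma indisc_op_bigU T (I : Type) (f : I -> set (indisc T)) :
  (forall i, indisc_op (f i)) -> indisc_op (\bigcup_i f i).
Proof.
move=> Hf; have [[i fi]|nex] := pselect (exists i, f i = setT).
  right; apply/seteqP; split=> // x _; exists i => //; by rewrite fi.
left; apply/seteqP; split=> // x [i _ fxi].
have [fi0|fiT] := Hf i; first by rewrite fi0 in fxi.
by case: nex; exists i.
Qed.

HB.instance Definition _ (T : Type) :=
  isOpenTopological.Build (indisc T) (@indisc_opT T) (@indisc_opI T) (@indisc_op_bigU T).

Lemma indisc_indiscrete T : indiscrete_top (indisc T).
Proof. by move=> A oA. Qed.

Lemma cont_to_indisc (Y : topologicalType) T (f : Y -> indisc T) : continuous f.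
Proof.
apply/continuousP => A [->|->]; rewrite ?preimage_set0 ?preimage_setT.
  exact: open0.
exact: openT.
Qed.

Lemma indisc_open_pre T (Y : topologicalType) (f : indisc T -> Y) (O : set Y) :
  continuous f -> open O -> f @^-1` O = set0 \/ f @^-1` O = setT.
Proof. by move=> /continuousP H /H. Qed.


Lemma zero_dim_C (C : subcat) : reflective C -> iso_closed C ->
  (forall X : topologicalType, indiscrete_top X -> C X) ->
  (exists D : topologicalType, C D /\ two_point_discrete D) ->
  forall Z : topologicalType,
  (forall U : set Z, open U -> forall x, U x ->
     exists K : set Z, [/\ open K, open (~` K), K x & K `<=` U]) ->
  C Z.
Proof.
move=> Hrefl Hiso Hind [D [CD [Ddisc [a [b [ab _]]]]]] Z Hz.
have [RZ [eta [CRZ ceta Hu]]] := Hrefl Z.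
have [[g [_ geta]] _] := Hu (indisc Z) (Hind _ (@indisc_indiscrete Z))
   (fun z : Z => (z : indisc Z)) (@cont_to_indisc _ _ _).
have getaz : forall z, g (eta z) = z by move=> z; exact: (congr1 (fun h => h z) geta).
have etasurj : forall r : RZ, exists z, eta z = r.
  move=> r.
  have [_ uniq] := Hu (indisc bool) (Hind _ (@indisc_indiscrete bool))
     (fun _ => true : indisc bool) (@cont_to_indisc _ _ _).
  have E := uniq (fun _ => true) (fun r => `[< exists z, eta z = r >])
     (@cont_to_indisc _ _ _) (@cont_to_indisc _ _ _) erefl
     (funext (fun z => asboolT (ex_intro _ z erefl))).
  have := congr1 (fun h => h r) E => /= /esym.
  by move/asboolP.
have etag : forall r, eta (g r) = r.
  by move=> r; have [z <-] := etasurj r; rewrite getaz.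
pose gz : RZ -> Z := fun r => g r.
have cgz : continuous gz.
  apply/continuousP => U oU.
  have -> : gz @^-1` U = \bigcup_(K in [set K : set Z | [/\ open K, open (~` K) & K `<=` U]])
      [set r | K (gz r)].
    apply/seteqP; split.
      move=> r Ur; have [K [oK oK' Kr KU]] := Hz U oU (gz r) Ur.
      by exists K.
    by move=> r [K [_ _ KU] Kr]; exact: KU.
  apply: bigcup_open => K [oK oK' _].
  pose chi : Z -> D := fun z => if `[< K z >] then a else b.
  have cchi : continuous chi.
    apply/continuousP => A _.
    have [Aa|Aa] := pselect (A a); have [Ab|Ab] := pselect (A b).
    - suff -> : chi @^-1` A = setT by exact: openT.
      by apply/seteqP; split=> // z _; rewrite /chi /preimage /=; case: ifP.
    - suff -> : chi @^-1` A = K by [].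
      apply/seteqP; split=> z; rewrite /chi /preimage /=.
        by case: (asboolP (K z)).
      by move=> Kz; rewrite asboolT.
    - suff -> : chi @^-1` A = ~` K by [].
      apply/seteqP; split=> z; rewrite /chi /preimage /=.
        by case: (asboolP (K z)).
      by move=> Kz; rewrite (introF (asboolP _) Kz).
    - suff -> : chi @^-1` A = set0 by exact: open0.
      apply/seteqP; split=> // z; rewrite /chi /preimage /=.
      by case: ifP.
  have [[h [ch heta]] _] := Hu D CD chi cchi.
  have hg : forall r, h r = chi (gz r).
    by move=> r; rewrite -{1}(etag r); exact: (congr1 (fun k => k (g r)) heta).
  have -> : [set r | K (gz r)] = h @^-1` [set a].
    apply/seteqP; split=> r; rewrite /preimage /= hg /chi.
      by move=> Kr; rewrite asboolT.
    by case: (asboolP (K (gz r))) => // _ ba; exfalso; exact: ab (esym ba).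
  by apply: (proj1 (continuousP h) ch); apply: Ddisc.
apply: (Hiso RZ Z gz) CRZ.
split=> //; exists eta; split=> //; split; apply: funext => x /=.
  exact: etag.
exact: getaz.
Qed.


Definition stage (n : nat) : Type := (bool * option nat)%type.
HB.instance Definition _ (n : nat) := gen_eqMixin (stage n).
HB.instance Definition _ (n : nat) := gen_choiceMixin (stage n).

Definition stage_op (n : nat) (U : set (stage n)) :=
  (forall b, U (b, None) -> exists m, forall k, (m <= k)%N -> U (b, Some k)) /\
  (forall b k, (k < n)%N -> (U (b, Some k) <-> U (~~ b, None))).

Lemma stage_opT n : stage_op (setT : set (stage n)).
Proof. by split=> // b _; exists 0%N. Qed.

Lemma stage_opI n : setI_closed (@stage_op n).
Proof.
move=> A B [A1 A2] [B1 B2]; split.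
  move=> b [/A1 [m Hm] /B1 [m' Hm']]; exists (maxn m m') => k hk.
  by split; [apply: Hm | apply: Hm']; apply: leq_trans hk;
    [exact: leq_maxl | exact: leq_maxr].
move=> b k kn; split.
  by move=> [/(A2 _ _ kn) ? /(B2 _ _ kn) ?].
by move=> [/(A2 _ _ kn) ? /(B2 _ _ kn) ?].
Qed.

Lemma stage_op_bigU n (I : Type) (f : I -> set (stage n)) :
  (forall i, stage_op (f i)) -> stage_op (\bigcup_i f i).
Proof.
move=> Hf; split.
  move=> b [i _ fi]; have [/(_ _ fi) [m Hm] _] := Hf i.
  by exists m => k hk; exists i => //; apply: Hm.
move=> b k kn; split.
  by move=> [i _ fi]; exists i => //; apply/(proj2 (Hf i) _ _ kn).
by move=> [i _ fi]; exists i => //; apply/(proj2 (Hf i) _ _ kn).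
Qed.

HB.instance Definition _ (n : nat) :=
  isOpenTopological.Build (stage n) (@stage_opT n) (@stage_opI n) (@stage_op_bigU n).

Lemma stage_open n (U : set (stage n)) : open U -> stage_op U.
Proof. by []. Qed.

Lemma stage_openP n (U : set (stage n)) : stage_op U -> open U.
Proof. by []. Qed.


Definition Kc n (c : bool) (m : nat) : set (stage n) := fun y =>
  match y with
  | (d, None) => d = c
  | (d, Some k) => if (k < n)%N then d = ~~ c else d = c /\ (m <= k)%N
  end.
Arguments Kc : clear implicits.

Lemma Kc_open n c m : (n <= m)%N -> open (Kc n c m) /\ open (~` Kc n c m).
Proof.
move=> nm; split; apply: stage_openP; split.
- move=> b /= ->; exists m => k mk.
  by rewrite ltnNge (leq_trans nm mk) /=.
- by move=> b k kn /=; rewrite kn; case: b; case: c.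
- move=> b /= bc; exists m => k mk /=.
  by rewrite ltnNge (leq_trans nm mk) /=; case.
- by move=> b k kn /=; rewrite kn; case: b; case: c.
Qed.

Lemma Kc_sub n c m (U : set (stage n)) : stage_op U -> U (c, None) ->
  (forall k, (m <= k)%N -> U (c, Some k)) -> Kc n c m `<=` U.
Proof.
move=> [U1 U2] Uc Ut [d [k|]] /=.
  case: ifP => kn.
    by move=> ->; apply/(U2 _ _ kn); rewrite negbK.
  by move=> [-> mk]; apply: Ut.
by move=> ->.
Qed.

Lemma single_open n b k : (n <= k)%N ->
  open ([set (b, Some k)] : set (stage n)) /\ open (~` ([set (b, Some k)] : set (stage n))).
Proof.
move=> nk; split; apply: stage_openP; split.
- by move=> b' /=.
- move=> b' j jn /=; split => // [[_ jk]].
  by move: jn; rewrite jk ltnNge nk.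
- move=> b' _; exists k.+1 => j kj /= [_ jk].
  by move: kj; rewrite jk ltnn.
- move=> b' j jn /=; split => _ // [_ jk].
  by move: jn; rewrite jk ltnNge nk.
Qed.

Lemma stage_zd n (U : set (stage n)) : open U -> forall x, U x ->
  exists K, [/\ open K, open (~` K), K x & K `<=` U].
Proof.
move=> /stage_open [U1 U2] x Ux.
have HK : forall c, U (c, None) -> exists K, [/\ open K, open (~` K), K `<=` U,
    K (c, None) & forall k, (k < n)%N -> K (~~ c, Some k)].
  move=> c Uc; have [m Hm] := U1 _ Uc.
  have nm : (n <= maxn n m)%N by exact: leq_maxl.
  have [o1 o2] := Kc_open c nm.
  exists (Kc n c (maxn n m)); split => //.
    apply: (Kc_sub (conj U1 U2) Uc).
    by move=> k mk; apply: Hm; apply: leq_trans mk; exact: leq_maxr.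
  by move=> k kn /=; rewrite kn.
move: Ux; case: x => b [k|] Ux.
  have [kn|nk] := ltnP k n.
    have Ub : U (~~ b, None) := proj1 (U2 _ _ kn) Ux.
    have [K [o1 o2 KU _ HKk]] := HK _ Ub.
    by exists K; split => //; have := HKk _ kn; rewrite negbK.
  have [o1 o2] := single_open b nk.
  by exists [set (b, Some k)]; split => // y ->.
have [K [o1 o2 KU HKb _]] := HK _ Ux.
by exists K; split.
Qed.


Lemma nat_directed : directed_poset (fun i j : nat => (i <= j)%N).
Proof.
split.
- by move=> i.
- by move=> i j ij ji; apply/eqP; rewrite eqn_leq ij ji.
- by move=> i j k; exact: leq_trans.
- elim=> [|a s [u Hu]]; first by exists 0%N.
  exists (maxn a u) => i /= [<-|/Hu iu]; first exact: leq_maxl.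
  by apply: leq_trans iu _; exact: leq_maxr.
Qed.

Definition Vn n : set (stage n) := fun y =>
  match y with
  | (c, None) => c = true
  | (c, Some k) => c = ~~ (k < n)%N
  end.
Arguments Vn : clear implicits.

Lemma Vn_open n : open (Vn n).
Proof.
apply: stage_openP; split.
  move=> b /= ->; exists n => k nk; by rewrite ltnNge nk.
by move=> b k kn /=; rewrite kn; case: b.
Qed.

Lemma fg_discrete (C : subcat) : reflective C -> iso_closed C ->
  (forall X : topologicalType, indiscrete_top X -> C X) ->
  (exists D : topologicalType, C D /\ two_point_discrete D) ->
  forall X : topologicalType, finitely_generated C X -> discrete_top X.
Proof.
move=> Hrefl Hiso Hind HD X fg A.
pose L := indisc (bool * option nat).
pose le := fun i j : nat => (i <= j)%N.
pose z := fun (i j : nat) (_ : le i j) (x : stage i) => (x : stage j).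
pose c := fun (i : nat) (x : stage i) => (x : L).
pose f := fun x : X => (if `[< A x >] then (true, None) else (false, None)) : L.
have CL : C L by apply: Hind; exact: indisc_indiscrete.
have Cdiag : Cdiagram C z.
  split => //.
  - move=> i; apply: (zero_dim_C Hrefl Hiso Hind HD); exact: stage_zd.
  - move=> i j ij; apply/continuousP => U /stage_open [U1 U2].
    apply: stage_openP; split => // b k ki; apply: U2.
    exact: leq_trans ki ij.
have Hcol : Ccolimit C z c.
  split => //; first by split => // i; exact: cont_to_indisc.
  move=> W CW d [dc dcomp].
  have dn : forall n (y : stage n), d n y = d 0%N y.
    by move=> n y; have := congr1 (fun h => h y) (dcomp 0%N n (leq0n n)).
  split; last first.
    move=> u u' _ _ H1 H2; apply: funext => y.
    have := congr1 (fun h => h y) (H1 0%N); have := congr1 (fun h => h y) (H2 0%N).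
    by rewrite /= => -> ->.
  exists (fun y : L => d 0%N y); split; last by move=> i; apply: funext => y /=; rewrite dn.
  apply/continuousP => O oO.
  pose P := (fun y : L => d 0%N y) @^-1` O.
  change (open P).
  have HP : forall n, stage_op (P : set (stage n)).
    move=> n; apply: stage_open.
    have := proj1 (continuousP (d n)) (dc n) O oO.
    suff -> : d n @^-1` O = P by [].
    by apply/seteqP; split => y; rewrite /preimage /= dn.
  have HA : forall b, P (b, None) -> P (~~ b, None).
    move=> b Pb; have [m Hm] := (proj1 (HP 0%N)) b Pb.
    by apply: (proj1 (proj2 (HP m.+1) b m (ltnSn m))); apply: Hm.
  have HB : forall b k, P (b, Some k) -> P (~~ b, None).
    by move=> b k Pk; apply: (proj1 (proj2 (HP k.+1) b k (ltnSn k))).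
  have [[y Py]|nP] := pselect (exists y, P y).
    suff -> : P = setT by exact: openT.
    have Pall : forall b, P (b, None).
      have [b [Pb Pnb]] : exists b, P (b, None) /\ P (~~ b, None).
        move: y Py => [b [k|]] Py.
          have H1 := HB _ _ Py; have := HA _ H1; rewrite negbK => H2.
          by exists b.
        by exists b; split => //; apply: HA.
      by move=> b'; case: b' b Pb Pnb => [] [].
    apply/seteqP; split => // [[b [k|]]] _.
      by apply: (proj2 (proj2 (HP k.+1) b k (ltnSn k))); apply: Pall.
    exact: Pall.
  suff -> : P = set0 by exact: open0.
  by apply/seteqP; split => // y' Py'; apply: nP; exists y'.
have [[n [g [cg Hg]]] _] := fg nat le stage z L c nat_directed Cdiag
  (fun i j p W _ g h _ _ E => E) Hcol f (@cont_to_indisc _ _ _).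
have gf : forall x, g x = f x.
  by move=> x; have := congr1 (fun h => h x) Hg.
suff -> : A = g @^-1` Vn n.
  exact: (proj1 (continuousP g) cg _ (Vn_open n)).
apply/seteqP; split => x; rewrite /preimage /= gf /f.
  by move=> Ax; rewrite asboolT.
by case: (asboolP (A x)).
Qed.


Lemma sig_eqP (T : Type) (P : T -> Prop) (x y : {t | P t}) :
  proj1_sig x = proj1_sig y -> x = y.
Proof.
case: x => x px; case: y => y py /= xy; subst y.
by rewrite (Prop_irrelevance px py).
Qed.

Lemma fg_finite (C : subcat) :
  (forall X : topologicalType, indiscrete_top X -> C X) ->
  forall X : topologicalType, finitely_generated C X -> finite_set [set: X].
Proof.
move=> Hind X fg.
pose I := {F : set X | finite_set F}.
pose le := fun F G : I => proj1_sig F `<=` proj1_sig G.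
pose Z := fun F : I => indisc {x : X | proj1_sig F x}.
pose z := fun (F G : I) (p : le F G) (x : Z F) =>
  (exist _ (proj1_sig x) (p _ (proj2_sig x)) : Z G).
pose L := indisc X.
pose c := fun (F : I) (x : Z F) => (proj1_sig x : L).
have dir : directed_poset le.
  split.
  - by move=> F.
  - move=> F G FG GF; apply: sig_eqP; apply/seteqP; split; [exact: FG | exact: GF].
  - by move=> F G H FG GH x /FG /GH.
  - elim=> [|a s [u Hu]]; first by exists (exist _ set0 (finite_set0 X)).
    have fin : finite_set (proj1_sig a `|` proj1_sig u).
      by rewrite finite_setU; split; [exact: proj2_sig a | exact: proj2_sig u].
    exists (exist _ _ fin) => i /= [<-|/Hu iu] x /=; first by left.
    by move/iu; right.
have Cdiag : Cdiagram C z.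
  split.
  - by move=> i; apply: Hind; exact: indisc_indiscrete.
  - by move=> i j p; exact: cont_to_indisc.
  - by move=> i p; apply: funext => x; apply: sig_eqP.
  - by move=> i j k p q r; apply: funext => x; apply: sig_eqP.
have mono : forall i j (p : le i j), Cmono C (z i j p).
  move=> i j p W _ g h _ _ E; apply: funext => w; apply: sig_eqP.
  by have := congr1 (fun k => proj1_sig (k w)) E.
have Hcol : Ccolimit C z c.
  split.
  - by apply: Hind; exact: indisc_indiscrete.
  - by split => // i; exact: cont_to_indisc.
  move=> W CW d [dc dcomp].
  pose sx := fun x : X => exist (@finite_set X) [set x] (finite_set1 x).
  pose u := fun x : L => d (sx x) (exist _ x erefl).
  have uc : forall F (w : Z F), u (proj1_sig w) = d F w.
    move=> F [y Fy] /=.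
    have p : le (sx y) F by move=> t /= ->.
    rewrite /u -(dcomp _ _ p) /=; congr (d F _); exact: sig_eqP.
  split; last first.
    move=> u1 u2 _ _ H1 H2; apply: funext => x.
    have := congr1 (fun h => h (exist _ x erefl : Z (sx x))) (H1 (sx x)).
    have := congr1 (fun h => h (exist _ x erefl : Z (sx x))) (H2 (sx x)).
    by rewrite /= => -> ->.
  exists u; split; last by move=> i; apply: funext => w; exact: uc.
  apply/continuousP => O oO.
  have [[x Ox]|nO] := pselect (exists x, (u @^-1` O) x); last first.
    suff -> : u @^-1` O = set0 by exact: open0.
    by apply/seteqP; split => // x' Ox'; apply: nO; exists x'.
  suff -> : u @^-1` O = setT by exact: openT.
  apply/seteqP; split => // y _.
  have fin : finite_set ([set x] `|` [set y]).
    by rewrite finite_setU; split; exact: finite_set1.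
  pose F : I := exist _ _ fin.
  have := indisc_open_pre (dc F) oO.
  have Fx : proj1_sig F x by left.
  have Fy : proj1_sig F y by right.
  move=> [E|E].
    have : (d F @^-1` O) (exist _ x Fx) by rewrite /preimage /= -(uc F (exist _ x Fx)).
    by rewrite E.
  have : (d F @^-1` O) (exist _ y Fy) by rewrite E.
  by rewrite /preimage /= -(uc F (exist _ y Fy)).
have [[F [g [_ Hg]]] _] := fg I le Z z L c dir Cdiag mono Hcol
  (fun x : X => (x : L)) (@cont_to_indisc _ _ _).
apply: (sub_finite_set _ (proj2_sig F)) => x _.
have -> : x = proj1_sig (g x) by have := congr1 (fun h => h x) Hg.
exact: proj2_sig (g x).
Qed.


Lemma mem_In (T : eqType) (x : T) (s : seq T) : x \in s -> List.In x s.
Proof.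
elim: s => //= a s IH; rewrite in_cons => /orP [/eqP ->|/IH]; by [left|right].
Qed.

Lemma finite_discrete_fg (C : subcat) :
  (forall X : topologicalType, indiscrete_top X -> C X) ->
  forall X : topologicalType, finite_set [set: X] -> discrete_top X ->
  finitely_generated C X.
Proof.
move=> Hind X fin disc I le Z z L c [refl anti trans ub] [CZ cz zid zcomp] _
  [CL [cc ccomp] univ] f cf.
have [s Hs] := proj1 (finite_seqP _) fin.
have ins : forall x : X, List.In x s.
  move=> x; apply: mem_In.
  by have : [set: X] x by []; rewrite Hs.
have Cb : C (indisc bool) by apply: Hind; exact: indisc_indiscrete.
have surj : forall l : L, exists iw : {i : I & Z i}, c (projT1 iw) (projT2 iw) = l.
  move=> l.
  have [_ uniq] := univ (indisc bool) Cb (fun i (_ : Z i) => true : indisc bool)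
    (conj (fun i => @cont_to_indisc _ _ _) (fun i j p => erefl)).
  have E := uniq (fun _ => true) (fun l => `[< exists iw : {i : I & Z i}, c (projT1 iw) (projT2 iw) = l >])
     (@cont_to_indisc _ _ _) (@cont_to_indisc _ _ _) (fun i => erefl)
     (fun i => funext (fun w => asboolT (ex_intro _ (existT _ i w) erefl))).
  have := congr1 (fun h => h l) E => /= /esym.
  by move/asboolP.
have joint : forall i (w w' : Z i), c i w = c i w' ->
    exists jp : {j : I & le i j}, z i (projT1 jp) (projT2 jp) w = z i (projT1 jp) (projT2 jp) w'.
  move=> i w w' E.
  pose d := fun j (y : Z j) => `[< exists k (p : le i k) (q : le j k), z j k q y = z i k p w >] : indisc bool.
  have dcoc : cocone z d.
    split; first by move=> j; exact: cont_to_indisc.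
    move=> j j' p0; apply: funext => y; apply: asbool_equiv_eq; split.
      move=> [k [p [q Hk]]]; exists k, p, (trans _ _ _ p0 q).
      by rewrite -Hk -(zcomp _ _ _ p0 q (trans _ _ _ p0 q)).
    move=> [k [p [q Hk]]].
    have [u Hu] := ub [:: k; j'].
    have ku : le k u by apply: Hu; left.
    have j'u : le j' u by apply: Hu; right; left.
    exists u, (trans _ _ _ p ku), j'u.
    have -> : z j' u j'u (z j j' p0 y) = z j u (trans _ _ _ p0 j'u) y.
      by rewrite -(zcomp _ _ _ p0 j'u).
    rewrite -(zcomp _ _ _ q ku (trans _ _ _ p0 j'u)) /= Hk.
    by have := congr1 (fun h => h w) (zcomp _ _ _ p ku (trans _ _ _ p ku)).
  have [[u [_ Hu]] _] := univ (indisc bool) Cb d dcoc.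
  have dw : d i w' = true.
    have -> : d i w' = u (c i w') by rewrite -(Hu i).
    rewrite -E -[u (c i w)]/((u \o c i) w) Hu /d.
    by apply: asboolT; exists i, (refl i), (refl i).
  move: dw; rewrite /d => /asboolP [k [p [q Hk]]].
  exists (existT _ k p) => /=.
  by rewrite -Hk (Prop_irrelevance p q).
split.
  have [e He] := choice (fun x => surj (f x)).
  have [u Hu] := ub (List.map (fun x => projT1 (e x)) s).
  have pu : forall x, le (projT1 (e x)) u.
    by move=> x; apply: Hu; apply: List.in_map.
  exists u, (fun x => z _ u (pu x) (projT2 (e x))); split.
    by apply/continuousP => A _; apply: disc.
  apply: funext => x /=.
  by rewrite -[c u _]/((c u \o z _ u (pu x)) (projT2 (e x))) ccomp He.
move=> i g g' _ _ Hg Hg'.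
have Ex : forall x, c i (g x) = c i (g' x).
  move=> x; have := congr1 (fun h => h x) Hg; have := congr1 (fun h => h x) Hg'.
  by rewrite /= => <- <-.
have [e He] := choice (fun x => joint i _ _ (Ex x)).
have [u Hu] := ub (i :: List.map (fun x => projT1 (e x)) s).
have iu : le i u by apply: Hu; left.
have pu : forall x, le (projT1 (e x)) u.
  by move=> x; apply: Hu; right; apply: List.in_map.
exists u, iu; apply: funext => x /=.
rewrite -(zcomp _ _ _ (projT2 (e x)) (pu x) iu) /=.
by rewrite He.
Qed.

End Aux.
Import Aux.

Theorem theorem7p10 (C : topologicalType -> Prop) :
  reflective C -> iso_closed C ->
  (exists X : topologicalType, C X /\ two_point_discrete X) ->
  (forall X : topologicalType, indiscrete_top X -> C X) ->
  (exists X : topologicalType, C X /\ ~ indiscrete_top X) ->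
  forall X : topologicalType, C X ->
    (finitely_generated C X <-> (finite_set [set: X] /\ discrete_top X)).
Proof.
move=> Hrefl Hiso HD Hind _ X _; split.
  move=> fg; split; first exact: (fg_finite Hind fg).
  exact: (fg_discrete Hrefl Hiso Hind HD fg).
by move=> [fin disc]; exact: (finite_discrete_fg Hind fin disc).
Qed.
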